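(* Let $X\in\mathbb{R}^{n\times p}$, $y\in\mathbb{R}^n$, $\lambda>0$, $\alpha>0$, $G=X^\top X+\alpha I_p$, $\tilde y=X^\top y$, and $F(\beta,d)=\big(\beta-T_\lambda(\beta+d),\ G\beta+nd-\tilde y\big)$. Consider the semismooth Newton iteration $z^{k+1}=z^k-H_k^{-1}F(z^k)$, $z^k=(\beta^k,d^k)$, where $$H_k=\begin{pmatrix} I_p-D_k & -D_k\\ G & nI_p\end{pmatrix},\qquad D_k=\operatorname{diag}\big(\mathbf 1_{\{|\beta^k_i+d^k_i|>\lambda\}}\big)_{i=1}^p .$$ Let $\hat z=(\hat\beta_{\lambda,\alpha},\hat d_{\lambda,\alpha})$ be the unique root of $F$. Then there is a neighborhood $U$ of $\hat z$ such that for every $z^0\in U$ the iterates are well defined, $z^k\to\hat z$, and $\|z^{k+1}-\hat z\|_2=o(\|z^k-\hat z\|_2)$ (local superlinear convergence). In particular $\beta^k$ converges locally superlinearly to $\hat\beta_{\lambda,\alpha}$, the unique minimizer of $J_{\lambda,\alpha}(\beta)=\frac{1}{2n}\|X\beta-y\|_2^2+\lambda\|\beta\|_1+\frac{\alpha}{2n}\|\beta\|_2^2$.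
   Context: $T_\lambda$ is the componentwise soft-threshold operator $T_\lambda(x)_i=\operatorname{sgn}(x_i)\max(|x_i|-\lambda,0)$. Equivalently, with $A_k=\{i:|\beta^k_i+d^k_i|>\lambda\}$, $B_k$ its complement, one step reads: $\beta^{k+1}_{B_k}=0$, $d^{k+1}_{A_k}=\lambda\operatorname{sgn}(\beta^k_{A_k}+d^k_{A_k})$, $\beta^{k+1}_{A_k}=G_{A_kA_k}^{-1}(\tilde y_{A_k}-nd^{k+1}_{A_k})$, $d^{k+1}_{B_k}=(\tilde y_{B_k}-G_{B_kA_k}\beta^{k+1}_{A_k})/n$. *)

(* Defs.v *)
(* classical reals. Vectors are nat -> R (only indices < dim
   matter), matrices are nat -> nat -> R. *)
From Stdlib Require Import Reals Lra Lia.
Open Scope R_scope.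

Fixpoint rsum (m : nat) (f : nat -> R) : R :=
  match m with
  | O => 0
  | S m' => rsum m' f + f m'
  end.

Definition soft (lam x : R) : R :=
  (if Rlt_dec 0 x then 1 else if Rlt_dec x 0 then -1 else 0) * Rmax (Rabs x - lam) 0.

Definition Gmat (n : nat) (X : nat -> nat -> R) (alpha : R) (i j : nat) : R :=
  rsum n (fun k => X k i * X k j) + (if Nat.eq_dec i j then alpha else 0).

Definition ytil (n : nat) (X : nat -> nat -> R) (y : nat -> R) (j : nat) : R :=
  rsum n (fun k => X k j * y k).

(* z in R^{2p} encodes (beta, d): beta_i = z i, d_i = z (p + i)%nat, i < p. *)
Definition Fmap (n p : nat) (X : nat -> nat -> R) (y : nat -> R) (lam alpha : R)
  (z : nat -> R) (i : nat) : R :=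
  if Nat.ltb i p then z i - soft lam (z i + z (p + i)%nat)
  else let i' := (i - p)%nat in
       rsum p (fun j => Gmat n X alpha i' j * z j) + INR n * z (p + i')%nat
       - ytil n X y i'.

Definition Dind (p : nat) (lam : R) (z : nat -> R) (i : nat) : R :=
  if Rlt_dec lam (Rabs (z i + z (p + i)%nat)) then 1 else 0.

Definition kron (i j : nat) : R := if Nat.eq_dec i j then 1 else 0.

Definition Hmat (n p : nat) (X : nat -> nat -> R) (lam alpha : R)
  (z : nat -> R) (i j : nat) : R :=
  if Nat.ltb i p then
    (if Nat.ltb j p then kron i j - Dind p lam z i * kron i j
     else - Dind p lam z i * kron i (j - p))
  else
    (if Nat.ltb j p then Gmat n X alpha (i - p) j
     else INR n * kron (i - p) (j - p)).

Definition is_inverse (m : nat) (A M : nat -> nat -> R) : Prop :=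
  (forall i j, (i < m)%nat -> (j < m)%nat ->
     rsum m (fun k => M i k * A k j) = kron i j) /\
  (forall i j, (i < m)%nat -> (j < m)%nat ->
     rsum m (fun k => A i k * M k j) = kron i j).

Definition newton_step (n p : nat) (X : nat -> nat -> R) (y : nat -> R)
  (lam alpha : R) (z z' : nat -> R) : Prop :=
  exists M, is_inverse (2 * p) (Hmat n p X lam alpha z) M /\
    forall i, (i < 2 * p)%nat ->
      z' i = z i - rsum (2 * p) (fun k => M i k * Fmap n p X y lam alpha z k).

Definition dist2 (m : nat) (u v : nat -> R) : R :=
  sqrt (rsum m (fun i => (u i - v i) ^ 2)).

Definition Jobj (n p : nat) (X : nat -> nat -> R) (y : nat -> R) (lam alpha : R)
  (b : nat -> R) : R :=
  / (2 * INR n) * rsum n (fun i => (rsum p (fun j => X i j * b j) - y i) ^ 2)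
  + lam * rsum p (fun j => Rabs (b j))
  + alpha / (2 * INR n) * rsum p (fun j => b j ^ 2).

(* Main.v *)
Set Warnings "-notation-overridden,-ambiguous-paths".
Require Import Defs.
From Stdlib Require Import Reals Lra Lia.
From mathcomp Require all_boot all_algebra Rstruct.
Open Scope R_scope.
Module MC.
Import all_boot all_algebra Rstruct.
Import GRing.Theory.

Lemma rsum_big m (f : nat -> R) : rsum m f = (\sum_(i < m) f i)%R.
Proof.
elim: m => [|m IH] /=; first by rewrite big_ord0.
by rewrite big_ord_recr /= IH.
Qed.

Lemma inv_exists (m : nat) (A : nat -> nat -> R) :
  (forall u : nat -> R, (forall j, lt j m -> rsum m (fun i => u i * A i j) = 0) ->
     forall i, lt i m -> u i = 0) ->
  exists M, is_inverse m A M.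
Proof.
case: m => [|m] Hinj.
  by exists (fun _ _ => 0); split => i j /leP.
pose Am : 'M[R]_m.+1 := (\matrix_(i, j) A i j)%R.
have kz : kermx Am = 0%R.
  apply/matrixP => i k.
  set r := row i (kermx Am).
  have hr : (r *m Am = 0)%R by rewrite -row_mul mulmx_ker row0.
  have hu : forall j, lt j m.+1 -> rsum m.+1 (fun l => r ord0 (inord l) * A l j) = 0.
    move=> j /ltP hj.
    rewrite rsum_big.
    transitivity ((r *m Am)%R ord0 (inord j)); last by rewrite hr mxE.
    rewrite mxE. apply eq_bigr; intros l _. by rewrite [Am _ _]mxE inordK // inord_val.
  have := Hinj _ hu k (ltP (ltn_ord k)).
  rewrite /= inord_val /r mxE.
  by move=> ->; rewrite mxE.
have unitA : Am \in unitmx.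
  rewrite -row_free_unit /row_free.
  have := mxrank_ker Am. rewrite kz mxrank0 => /eqP. rewrite eq_sym subn_eq0 => h.
  apply/eqP/anti_leq. by rewrite rank_leq_row h.
exists (fun i j => invmx Am (inord i) (inord j)).
split => i j /ltP hi /ltP hj.
  rewrite rsum_big.
  have := congr1 (fun M : 'M[R]_m.+1 => M (inord i) (inord j)) (mulVmx unitA).
  rewrite !mxE => E.
  transitivity (\sum_j0 invmx Am (inord i) j0 * Am j0 (inord j))%R.
    apply eq_bigr; intros l _. by rewrite [Am _ _]mxE ?inordK // !inord_val.
  rewrite E /kron.
  case: Nat.eq_dec => [->|ne]; first by rewrite eqxx.
  case: eqP => // /(congr1 val); rewrite /= !inordK //.
rewrite rsum_big.
have := congr1 (fun M : 'M[R]_m.+1 => M (inord i) (inord j)) (mulmxV unitA).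
rewrite !mxE => E.
transitivity (\sum_j0 Am (inord i) j0 * invmx Am j0 (inord j))%R.
  apply eq_bigr; intros l _. by rewrite [Am _ _]mxE ?inordK // !inord_val.
rewrite E /kron.
case: Nat.eq_dec => [->|ne]; first by rewrite eqxx.
case: eqP => // /(congr1 val); rewrite /= !inordK //.
Qed.
End MC.

Lemma rsum_ext m f g : (forall i, (i < m)%nat -> f i = g i) -> rsum m f = rsum m g.
Proof. induction m; intros H; simpl; auto. rewrite IHm by (intros; apply H; lia). rewrite (H m) by lia. reflexivity. Qed.

Lemma rsum_plus m f g : rsum m (fun i => f i + g i) = rsum m f + rsum m g.
Proof. induction m; simpl; [ring| rewrite IHm; ring]. Qed.

Lemma rsum_minus m f g : rsum m (fun i => f i - g i) = rsum m f - rsum m g.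
Proof. induction m; simpl; [ring| rewrite IHm; ring]. Qed.

Lemma rsum_scal m c f : rsum m (fun i => c * f i) = c * rsum m f.
Proof. induction m; simpl; [ring| rewrite IHm; ring]. Qed.

Lemma rsum_zero m f : (forall i, (i < m)%nat -> f i = 0) -> rsum m f = 0.
Proof. intros H. rewrite (rsum_ext m f (fun _ => 0)) by auto. clear H. induction m; simpl; [ring | rewrite IHm; ring]. Qed.

Lemma rsum_swap m k F : rsum m (fun i => rsum k (fun j => F i j)) = rsum k (fun j => rsum m (fun i => F i j)).
Proof.
induction m; simpl.
- symmetry; apply rsum_zero; auto.
- rewrite IHm, <- rsum_plus. reflexivity.
Qed.

Lemma rsum_split a b f : rsum (a + b) f = rsum a f + rsum b (fun j => f (a + j)%nat).
Proof.
induction b; simpl.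
- rewrite Nat.add_0_r; ring.
- rewrite Nat.add_succ_r; simpl; rewrite IHb; ring.
Qed.

Lemma kron_sym i j : kron i j = kron j i.
Proof. unfold kron; destruct (Nat.eq_dec i j), (Nat.eq_dec j i); auto; lia. Qed.

Lemma rsum_kron m i g : (i < m)%nat -> rsum m (fun k => kron i k * g k) = g i.
Proof.
induction m; intros H; [lia|]. simpl.
destruct (Nat.eq_dec i m).
- subst. rewrite rsum_zero. unfold kron; destruct (Nat.eq_dec m m); [ring|lia].
  intros k Hk; unfold kron; destruct (Nat.eq_dec m k); [lia|ring].
- rewrite IHm by lia. unfold kron; destruct (Nat.eq_dec i m); [lia|ring].
Qed.

Lemma rsum_le m f g : (forall i, (i < m)%nat -> f i <= g i) -> rsum m f <= rsum m g.
Proof. induction m; intros H; simpl; [lra|]. assert (f m <= g m) by (apply H; lia). assert (rsum m f <= rsum m g) by (apply IHm; intros; apply H; lia). lra. Qed.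

Lemma rsum_nonneg m f : (forall i, (i < m)%nat -> 0 <= f i) -> 0 <= rsum m f.
Proof. intros H. replace 0 with (rsum m (fun _ => 0)) by (apply rsum_zero; auto). apply rsum_le; auto. Qed.

Lemma rsum_sq_nonneg m f : 0 <= rsum m (fun i => f i ^ 2).
Proof. apply rsum_nonneg; intros; nra. Qed.

Lemma rsum_sq_single m f i : (i < m)%nat -> f i ^ 2 <= rsum m (fun k => f k ^ 2).
Proof.
induction m; intros H; [lia|]. cbn [rsum].
assert (0 <= rsum m (fun k => f k ^ 2)) by apply rsum_sq_nonneg.
pose proof (pow2_ge_0 (f m)).
destruct (Nat.eq_dec i m). subst; lra.
assert (f i ^ 2 <= rsum m (fun k => f k ^ 2)) by (apply IHm; lia). lra.
Qed.

Lemma rsum_sq_zero m f : rsum m (fun i => f i ^ 2) = 0 -> forall i, (i < m)%nat -> f i = 0.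
Proof.
intros H i Hi. pose proof (rsum_sq_single m f i Hi). assert (0 <= f i ^ 2) by nra.
assert (E : f i * f i = 0) by (simpl in *; lra). destruct (Rmult_integral _ _ E); auto.
Qed.

Lemma dist2_coord m u v i : (i < m)%nat -> Rabs (u i - v i) <= dist2 m u v.
Proof.
intros Hi. unfold dist2. rewrite <- sqrt_Rsqr_abs. apply sqrt_le_1_alt.
pose proof (rsum_sq_single m (fun k => u k - v k) i Hi) as H. cbv beta in H. unfold Rsqr. replace ((u i - v i) * (u i - v i)) with ((u i - v i) ^ 2) by ring. exact H.
Qed.

Lemma dist2_nonneg m u v : 0 <= dist2 m u v.
Proof. unfold dist2; apply sqrt_pos. Qed.

Lemma dist2_zero m u v : (forall i, (i < m)%nat -> u i = v i) -> dist2 m u v = 0.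
Proof. intros H. unfold dist2. rewrite rsum_zero. apply sqrt_0. intros i Hi; rewrite H by auto; ring. Qed.
Ltac splitall := repeat match goal with
 | |- context [Rlt_dec ?x ?y] => destruct (Rlt_dec x y)
 | H: context [Rlt_dec ?x ?y] |- _ => destruct (Rlt_dec x y)
 | |- context [Rle_dec ?x ?y] => destruct (Rle_dec x y)
 | H: context [Rle_dec ?x ?y] |- _ => destruct (Rle_dec x y)
 | |- context [Rcase_abs ?x] => destruct (Rcase_abs x)
 | H: context [Rcase_abs ?x] |- _ => destruct (Rcase_abs x)
 end.

Lemma scalar_row lam c a ahat b bhat : 0 < lam -> 0 < c -> c <= lam ->
  (Rabs (ahat + bhat) <> lam -> c <= Rabs (Rabs (ahat + bhat) - lam)) ->
  Rabs ((a + b) - (ahat + bhat)) < c ->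
  ahat - soft lam (ahat + bhat) = 0 ->
  a - soft lam (a + b) =
  (1 - (if Rlt_dec lam (Rabs (a + b)) then 1 else 0)) * (a - ahat)
  - (if Rlt_dec lam (Rabs (a + b)) then 1 else 0) * (b - bhat).
Proof.
intros Hl Hc Hcl Hne Ht Hr.
destruct (Req_dec (Rabs (ahat + bhat)) lam) as [E|NE].
- clear Hne. unfold soft, Rmax, Rabs in *. splitall; lra.
- specialize (Hne NE). unfold soft, Rmax, Rabs in *. splitall; lra.
Qed.

Definition sv (p : nat) (z : nat -> R) (i : nat) : R := z i + z (p + i)%nat.

Definition c_ok (p : nat) (lam c : R) (zhat : nat -> R) : Prop :=
  0 < c /\ c <= lam /\ forall i, (i < p)%nat -> Rabs (sv p zhat i) <> lam ->
    c <= Rabs (Rabs (sv p zhat i) - lam).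

Lemma ltb_t i p : (i < p)%nat -> Nat.ltb i p = true.
Proof. apply Nat.ltb_lt. Qed.
Lemma ltb_f i p : (p <= i)%nat -> Nat.ltb i p = false.
Proof. apply Nat.ltb_ge. Qed.

Lemma F_exact n p X y lam alpha zhat c z :
  0 < lam -> c_ok p lam c zhat ->
  (forall i, (i < 2 * p)%nat -> Fmap n p X y lam alpha zhat i = 0) ->
  (forall i, (i < p)%nat -> Rabs (sv p z i - sv p zhat i) < c) ->
  forall i, (i < 2 * p)%nat ->
    Fmap n p X y lam alpha z i =
    rsum (2 * p) (fun k => Hmat n p X lam alpha z i k * (z k - zhat k)).
Proof.
intros Hl [Hc [Hcl Hne]] Hroot Hclose i Hi.
replace (2 * p)%nat with (p + p)%nat in * by lia.
rewrite rsum_split.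
destruct (Nat.lt_ge_cases i p) as [Hip|Hip].
- unfold Fmap. rewrite (ltb_t i p Hip).
  rewrite (rsum_ext p (fun k => Hmat n p X lam alpha z i k * (z k - zhat k))
             (fun k => kron i k * ((1 - Dind p lam z i) * (z k - zhat k)))).
  2:{ intros k Hk. unfold Hmat. rewrite (ltb_t i p Hip), (ltb_t k p Hk). ring. }
  rewrite (rsum_ext p (fun k => Hmat n p X lam alpha z i (p + k)%nat * (z (p + k)%nat - zhat (p + k)%nat))
             (fun k => kron i k * (- Dind p lam z i * (z (p + k)%nat - zhat (p + k)%nat)))).
  2:{ intros k Hk. unfold Hmat. rewrite (ltb_t i p Hip), (ltb_f (p + k) p) by lia.
      replace (p + k - p)%nat with k by lia. ring. }
  rewrite !rsum_kron by auto.
  pose proof (Hroot i ltac:(lia)) as Hr. unfold Fmap in Hr. rewrite (ltb_t i p Hip) in Hr.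
  unfold Dind.
  pose proof (scalar_row lam c (z i) (zhat i) (z (p+i)%nat) (zhat (p+i)%nat) Hl Hc Hcl
     (Hne i Hip) (Hclose i Hip) Hr) as E.
  rewrite E. ring.
- unfold Fmap. rewrite (ltb_f i p Hip).
  pose proof (Hroot i ltac:(lia)) as Hr. unfold Fmap in Hr. rewrite (ltb_f i p Hip) in Hr.
  rewrite (rsum_ext p (fun k => Hmat n p X lam alpha z i k * (z k - zhat k))
             (fun k => Gmat n X alpha (i - p) k * z k - Gmat n X alpha (i - p) k * zhat k)).
  2:{ intros k Hk. unfold Hmat. rewrite (ltb_f i p Hip), (ltb_t k p Hk). ring. }
  rewrite (rsum_ext p (fun k => Hmat n p X lam alpha z i (p + k)%nat * (z (p + k)%nat - zhat (p + k)%nat))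
             (fun k => kron (i - p) k * (INR n * (z (p + k)%nat - zhat (p + k)%nat)))).
  2:{ intros k Hk. unfold Hmat. rewrite (ltb_f i p Hip), (ltb_f (p + k) p) by lia.
      replace (p + k - p)%nat with k by lia. ring. }
  rewrite rsum_kron by lia.
  rewrite rsum_minus.
  lra.
Qed.
Lemma step_exact m (H M : nat -> nat -> R) (F z zhat : nat -> R) :
  is_inverse m H M ->
  (forall i, (i < m)%nat -> F i = rsum m (fun k => H i k * (z k - zhat k))) ->
  forall i, (i < m)%nat -> z i - rsum m (fun k => M i k * F k) = zhat i.
Proof.
intros [Hl _] HF i Hi.
rewrite (rsum_ext m (fun k => M i k * F k) (fun k => rsum m (fun j => M i k * H k j * (z j - zhat j)))).
2:{ intros k Hk. rewrite HF by auto. rewrite <- rsum_scal. apply rsum_ext; intros; ring. }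
rewrite rsum_swap.
rewrite (rsum_ext m _ (fun j => kron i j * (z j - zhat j))).
2:{ intros j Hj. rewrite <- Hl by auto. rewrite Rmult_comm, <- rsum_scal. apply rsum_ext; intros; ring. }
rewrite rsum_kron by auto. ring.
Qed.

Lemma quad_G n p X alpha v :
  rsum p (fun j => v j * rsum p (fun i => v i * Gmat n X alpha i j)) =
  rsum n (fun k => (rsum p (fun i => X k i * v i)) ^ 2) + alpha * rsum p (fun j => v j ^ 2).
Proof.
unfold Gmat.
rewrite (rsum_ext p _ (fun j => rsum n (fun k => rsum p (fun i => X k i * v i) * (X k j * v j)) + alpha * v j ^ 2)).
2:{ intros j Hj.
    rewrite (rsum_ext p _ (fun i => rsum n (fun k => X k i * v i * X k j) + alpha * (kron j i * v i))).
    2:{ intros i Hi. rewrite Rmult_plus_distr_l, <- rsum_scal. f_equal.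
        - apply rsum_ext; intros; ring.
        - unfold kron; destruct (Nat.eq_dec i j), (Nat.eq_dec j i); try lia; ring. }
    rewrite rsum_plus, rsum_scal, rsum_kron by auto. rewrite rsum_swap.
    rewrite Rmult_plus_distr_l, <- rsum_scal. f_equal.
    - apply rsum_ext; intros k _. rewrite (Rmult_comm (rsum p _)), <- !rsum_scal.
      apply rsum_ext; intros; ring.
    - ring. }
rewrite rsum_plus, rsum_swap, rsum_scal. f_equal. apply rsum_ext; intros k _.
rewrite rsum_scal. ring.
Qed.

Lemma Dind01 p lam z i : Dind p lam z i = 0 \/ Dind p lam z i = 1.
Proof. unfold Dind; destruct Rlt_dec; auto. Qed.

Lemma H_inv n p X lam alpha z : (0 < n)%nat -> 0 < alpha ->
  exists M, is_inverse (2 * p) (Hmat n p X lam alpha z) M.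
Proof.
intros Hn Ha. apply MC.inv_exists. intros u Hu.
assert (Hn' : 0 < INR n) by (apply lt_0_INR; lia).
replace (2 * p)%nat with (p + p)%nat in * by lia.
assert (Hc1 : forall j, (j < p)%nat ->
  u j * (1 - Dind p lam z j) + rsum p (fun i => u (p + i)%nat * Gmat n X alpha i j) = 0).
{ intros j Hj. pose proof (Hu j ltac:(lia)) as E. rewrite rsum_split in E.
  rewrite (rsum_ext p (fun i => u i * Hmat n p X lam alpha z i j)
     (fun i => kron j i * (u i * (1 - Dind p lam z i)))) in E.
  2:{ intros i Hi. unfold Hmat. rewrite (ltb_t i p Hi), (ltb_t j p Hj). rewrite (kron_sym j i). ring. }
  rewrite (rsum_ext p (fun i => u (p + i)%nat * Hmat n p X lam alpha z (p + i)%nat j)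
     (fun i => u (p + i)%nat * Gmat n X alpha i j)) in E.
  2:{ intros i Hi. unfold Hmat. rewrite (ltb_f (p + i) p), (ltb_t j p Hj) by lia.
      replace (p + i - p)%nat with i by lia. reflexivity. }
  rewrite rsum_kron in E by auto. exact E. }
assert (Hc2 : forall j, (j < p)%nat -> - u j * Dind p lam z j + INR n * u (p + j)%nat = 0).
{ intros j Hj. pose proof (Hu (p + j)%nat ltac:(lia)) as E. rewrite rsum_split in E.
  rewrite (rsum_ext p (fun i => u i * Hmat n p X lam alpha z i (p + j)%nat)
     (fun i => kron j i * (- u i * Dind p lam z i))) in E.
  2:{ intros i Hi. unfold Hmat. rewrite (ltb_t i p Hi), (ltb_f (p + j) p) by lia.
      replace (p + j - p)%nat with j by lia. rewrite (kron_sym j i). ring. }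
  rewrite (rsum_ext p (fun i => u (p + i)%nat * Hmat n p X lam alpha z (p + i)%nat (p + j)%nat)
     (fun i => kron j i * (INR n * u (p + i)%nat))) in E.
  2:{ intros i Hi. unfold Hmat. rewrite (ltb_f (p + i) p), (ltb_f (p + j) p) by lia.
      replace (p + i - p)%nat with i by lia. replace (p + j - p)%nat with j by lia.
      rewrite (kron_sym j i). ring. }
  rewrite !rsum_kron in E by auto. exact E. }
assert (Hq : rsum p (fun j => u (p + j)%nat * rsum p (fun i => u (p + i)%nat * Gmat n X alpha i j)) = 0).
{ apply rsum_zero. intros j Hj. specialize (Hc1 j Hj). specialize (Hc2 j Hj).
  destruct (Dind01 p lam z j) as [D|D]; rewrite D in *.
  - assert (u (p + j)%nat = 0) by nra. rewrite H; ring.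
  - assert (E : rsum p (fun i => u (p + i)%nat * Gmat n X alpha i j) = 0) by lra. rewrite E; ring. }
rewrite quad_G in Hq.
pose proof (rsum_sq_nonneg n (fun k => rsum p (fun i => X k i * u (p + i)%nat))) as P1.
pose proof (rsum_sq_nonneg p (fun j => u (p + j)%nat)) as P2.
assert (Hb : rsum p (fun j => u (p + j)%nat ^ 2) = 0) by nra.
pose proof (rsum_sq_zero p (fun j => u (p + j)%nat) Hb) as Hb0. cbv beta in Hb0.
assert (Hua : forall j, (j < p)%nat -> u j = 0).
{ intros j Hj. specialize (Hc1 j Hj). specialize (Hc2 j Hj). rewrite Hb0 in Hc2 by auto.
  rewrite rsum_zero in Hc1 by (intros i Hi; rewrite Hb0 by auto; ring).
  destruct (Dind01 p lam z j) as [D|D]; rewrite D in *; lra. }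
intros i Hi. destruct (Nat.lt_ge_cases i p).
- apply Hua; auto.
- replace i with (p + (i - p))%nat by lia. apply Hb0; lia.
Qed.

Lemma subgrad lam bh dh bb : 0 < lam -> bh - soft lam (bh + dh) = 0 ->
  0 <= lam * Rabs bb - lam * Rabs bh - (bb - bh) * dh.
Proof.
intros Hl Hr. unfold soft, Rmax, Rabs in *. splitall; nra.
Qed.

Lemma Xr_eq n p X y alpha zhat j : (j < p)%nat ->
  rsum p (fun i => Gmat n X alpha j i * zhat i) + INR n * zhat (p + j)%nat - ytil n X y j = 0 ->
  rsum n (fun k => X k j * (rsum p (fun i => X k i * zhat i) - y k)) =
  - INR n * zhat (p + j)%nat - alpha * zhat j.
Proof.
intros Hj Hr.
rewrite (rsum_ext n _ (fun k => rsum p (fun i => X k j * X k i * zhat i) - X k j * y k)).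
2:{ intros k _. rewrite Rmult_minus_distr_l, <- rsum_scal. f_equal. apply rsum_ext; intros; ring. }
rewrite rsum_minus, rsum_swap.
rewrite (rsum_ext p (fun i => Gmat n X alpha j i * zhat i)
   (fun i => rsum n (fun k => X k j * X k i * zhat i) + kron j i * (alpha * zhat i))) in Hr.
2:{ intros i _. unfold Gmat, kron. destruct (Nat.eq_dec j i).
    - rewrite Rmult_plus_distr_r. f_equal. rewrite Rmult_comm, <- rsum_scal. apply rsum_ext; intros; ring. ring.
    - rewrite Rplus_0_r, Rmult_comm, <- rsum_scal. rewrite Rmult_0_l, Rplus_0_r. apply rsum_ext; intros; ring. }
rewrite rsum_plus, rsum_kron in Hr by auto.
unfold ytil in Hr. lra.
Qed.

Lemma J_diff n p X y lam alpha zhat b : (0 < n)%nat ->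
  (forall i, (i < 2 * p)%nat -> Fmap n p X y lam alpha zhat i = 0) ->
  Jobj n p X y lam alpha b - Jobj n p X y lam alpha zhat =
  (lam * rsum p (fun j => Rabs (b j)) - lam * rsum p (fun j => Rabs (zhat j))
   - rsum p (fun j => (b j - zhat j) * zhat (p + j)%nat))
  + / (2 * INR n) * rsum n (fun k => (rsum p (fun j => X k j * (b j - zhat j))) ^ 2)
  + alpha / (2 * INR n) * rsum p (fun j => (b j - zhat j) ^ 2).
Proof.
intros Hn Hroot.
assert (Hn' : 0 < INR n) by (apply lt_0_INR; lia).
set (r := fun k => rsum p (fun j => X k j * zhat j) - y k).
set (e := fun k => rsum p (fun j => X k j * (b j - zhat j))).
assert (A1 : rsum n (fun k => (rsum p (fun j => X k j * b j) - y k) ^ 2) =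
   rsum n (fun k => r k ^ 2) + 2 * rsum n (fun k => r k * e k) + rsum n (fun k => e k ^ 2)).
{ rewrite <- rsum_scal, <- !rsum_plus. apply rsum_ext; intros k _.
  replace (rsum p (fun j => X k j * b j)) with (rsum p (fun j => X k j * zhat j) + e k).
  unfold r; ring. unfold e. rewrite <- rsum_plus. apply rsum_ext; intros; ring. }
assert (A2 : rsum n (fun k => r k * e k) =
   - INR n * rsum p (fun j => (b j - zhat j) * zhat (p + j)%nat)
   - alpha * rsum p (fun j => zhat j * (b j - zhat j))).
{ rewrite (rsum_ext n _ (fun k => rsum p (fun j => r k * X k j * (b j - zhat j)))).
  2:{ intros k _. unfold e. rewrite <- rsum_scal. apply rsum_ext; intros; ring. }
  rewrite rsum_swap.
  rewrite <- !rsum_scal, <- rsum_minus. apply rsum_ext; intros j Hj.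
  rewrite (rsum_ext n _ (fun k => (b j - zhat j) * (X k j * (rsum p (fun i => X k i * zhat i) - y k)))).
  2:{ intros k _. unfold r. ring. }
  rewrite rsum_scal, (Xr_eq n p X y alpha zhat j Hj). ring.
  pose proof (Hroot (p + j)%nat ltac:(lia)) as Hr. unfold Fmap in Hr.
  rewrite ltb_f in Hr by lia. replace (p + j - p)%nat with j in Hr by lia. exact Hr. }
assert (A3 : rsum p (fun j => b j ^ 2) = rsum p (fun j => zhat j ^ 2)
   + 2 * rsum p (fun j => zhat j * (b j - zhat j)) + rsum p (fun j => (b j - zhat j) ^ 2)).
{ rewrite <- rsum_scal, <- !rsum_plus. apply rsum_ext; intros; ring. }
unfold Jobj. rewrite A1, A3, A2. unfold r, e. cbv beta. field. lra.
Qed.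

Definition esp (p : nat) (lam : R) (zhat : nat -> R) (i : nat) : R :=
  if Rlt_dec (Rabs (sv p zhat i)) lam then Rmin lam (lam - Rabs (sv p zhat i))
  else if Rlt_dec lam (Rabs (sv p zhat i)) then Rmin lam (Rabs (sv p zhat i) - lam)
  else lam.

Fixpoint cmin (p : nat) (lam : R) (zhat : nat -> R) (m : nat) : R :=
  match m with
  | O => lam
  | S m' => Rmin (cmin p lam zhat m') (esp p lam zhat m')
  end.

Lemma esp_pos p lam zhat i : 0 < lam -> 0 < esp p lam zhat i.
Proof. intros Hl. unfold esp, Rmin. splitall; lra. Qed.

Lemma cmin_prop p lam zhat m : 0 < lam ->
  0 < cmin p lam zhat m /\ cmin p lam zhat m <= lam /\
  forall i, (i < m)%nat -> cmin p lam zhat m <= esp p lam zhat i.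
Proof.
intros Hl. induction m as [|m [IH1 [IH2 IH3]]]; simpl.
- split; [lra|split; [lra|intros; lia]].
- pose proof (esp_pos p lam zhat m Hl).
  split; [unfold Rmin; destruct Rle_dec; lra|].
  split; [pose proof (Rmin_l (cmin p lam zhat m) (esp p lam zhat m)); lra|].
  intros i Hi. destruct (Nat.eq_dec i m).
  + subst. apply Rmin_r.
  + pose proof (IH3 i ltac:(lia)). pose proof (Rmin_l (cmin p lam zhat m) (esp p lam zhat m)). lra.
Qed.

Lemma cmin_ok p lam zhat : 0 < lam -> c_ok p lam (cmin p lam zhat p) zhat.
Proof.
intros Hl. destruct (cmin_prop p lam zhat p Hl) as [H1 [H2 H3]].
split; [auto|split; [auto|]]. intros i Hi Hne. specialize (H3 i Hi).
unfold esp in H3. unfold Rmin in H3. set (s := Rabs (sv p zhat i)) in *.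
unfold Rabs. revert H3 Hne. splitall; intros; try lra.
Qed.

Lemma close_of_dist p c (z zhat : nat -> R) : dist2 (2 * p) z zhat < c / 2 ->
  forall i, (i < p)%nat -> Rabs (sv p z i - sv p zhat i) < c.
Proof.
intros Hd i Hi.
pose proof (dist2_coord (2 * p) z zhat i ltac:(lia)).
pose proof (dist2_coord (2 * p) z zhat (p + i)%nat ltac:(lia)).
unfold sv.
replace (z i + z (p + i)%nat - (zhat i + zhat (p + i)%nat)) with
  ((z i - zhat i) + (z (p + i)%nat - zhat (p + i)%nat)) by ring.
pose proof (Rabs_triang (z i - zhat i) (z (p + i)%nat - zhat (p + i)%nat)). lra.
Qed.

Theorem theorem2 (n p : nat) (X : nat -> nat -> R) (y : nat -> R)
  (lam alpha : R) (zhat : nat -> R)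
  (Hn : (0 < n)%nat) (Hlam : 0 < lam) (Halpha : 0 < alpha)
  (Hroot : forall i, (i < 2 * p)%nat -> Fmap n p X y lam alpha zhat i = 0) :
  (exists delta, 0 < delta /\
    forall z0 : nat -> R, dist2 (2 * p) z0 zhat < delta ->
      (* iterates are well defined *)
      (exists z : nat -> nat -> R, z O = z0 /\
         forall k, newton_step n p X y lam alpha (z k) (z (S k))) /\
      (* every Newton sequence from z0 converges superlinearly to zhat *)
      (forall z : nat -> nat -> R, z O = z0 ->
         (forall k, newton_step n p X y lam alpha (z k) (z (S k))) ->
         (forall eps, 0 < eps -> exists K, forall k, (K <= k)%nat ->
             dist2 (2 * p) (z k) zhat < eps) /\
         (forall eps, 0 < eps -> exists K, forall k, (K <= k)%nat ->
             dist2 (2 * p) (z (S k)) zhat <= eps * dist2 (2 * p) (z k) zhat)))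
  /\
  (* beta-hat (first p coordinates of zhat) is the unique minimizer of J *)
  (forall b : nat -> R,
     Jobj n p X y lam alpha zhat <= Jobj n p X y lam alpha b /\
     (Jobj n p X y lam alpha b = Jobj n p X y lam alpha zhat ->
        forall j, (j < p)%nat -> b j = zhat j)).
Proof.
split.
- pose (c := cmin p lam zhat p).
  assert (Hc : c_ok p lam c zhat) by (apply cmin_ok; auto).
  assert (Hcp : 0 < c) by (destruct Hc; auto).
  assert (Step : forall z z', dist2 (2 * p) z zhat < c / 2 ->
     newton_step n p X y lam alpha z z' -> forall i, (i < 2 * p)%nat -> z' i = zhat i).
  { intros z z' Hd [M [HM Hz']] i Hi. rewrite Hz' by auto.
    apply (step_exact (2 * p) (Hmat n p X lam alpha z) M); auto.
    apply (F_exact n p X y lam alpha zhat c z Hlam Hc Hroot).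
    apply close_of_dist; auto. }
  assert (Ex : forall z, dist2 (2 * p) z zhat < c / 2 ->
     newton_step n p X y lam alpha z zhat).
  { intros z Hd. destruct (H_inv n p X lam alpha z Hn Halpha) as [M HM].
    exists M. split; auto. intros i Hi. symmetry.
    apply (step_exact (2 * p) (Hmat n p X lam alpha z) M); auto.
    apply (F_exact n p X y lam alpha zhat c z Hlam Hc Hroot).
    apply close_of_dist; auto. }
  assert (Hzz : dist2 (2 * p) zhat zhat < c / 2) by (rewrite dist2_zero by auto; lra).
  exists (c / 2). split; [lra|]. intros z0 Hz0. split.
  + exists (fun k => match k with O => z0 | S _ => zhat end). split; [reflexivity|].
    intros k; destruct k; simpl; apply Ex; auto.
  + intros z Hz0' Hstep.
    assert (All : forall k i, (i < 2 * p)%nat -> z (S k) i = zhat i).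
    { induction k.
      - apply (Step (z O)); auto. rewrite Hz0'; auto.
      - apply (Step (z (S k))); auto. rewrite dist2_zero by auto. lra. }
    assert (D0 : forall k, dist2 (2 * p) (z (S k)) zhat = 0).
    { intros k. apply dist2_zero. apply All. }
    split.
    * intros eps Heps. exists 1%nat. intros k Hk. destruct k; [lia|]. rewrite D0. lra.
    * intros eps Heps. exists O. intros k _. rewrite D0.
      pose proof (dist2_nonneg (2 * p) (z k) zhat). nra.
- intros b.
  pose proof (J_diff n p X y lam alpha zhat b Hn Hroot) as JD.
  assert (Hn' : 0 < INR n) by (apply lt_0_INR; lia).
  assert (T1 : 0 <= lam * rsum p (fun j => Rabs (b j)) - lam * rsum p (fun j => Rabs (zhat j))
      - rsum p (fun j => (b j - zhat j) * zhat (p + j)%nat)).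
  { rewrite <- !rsum_scal, <- !rsum_minus. apply rsum_nonneg. intros j Hj.
    apply subgrad; auto. pose proof (Hroot j ltac:(lia)) as Hr. unfold Fmap in Hr.
    rewrite ltb_t in Hr by auto. exact Hr. }
  pose proof (rsum_sq_nonneg n (fun k => rsum p (fun j => X k j * (b j - zhat j)))) as E2.
  pose proof (rsum_sq_nonneg p (fun j => b j - zhat j)) as D2.
  assert (W1 : 0 < / (2 * INR n)) by (apply Rinv_0_lt_compat; lra).
  assert (W2 : 0 < alpha / (2 * INR n)) by (unfold Rdiv; apply Rmult_lt_0_compat; lra).
  cbv beta in E2, D2.
  assert (P1 : 0 <= / (2 * INR n) * rsum n (fun k => rsum p (fun j => X k j * (b j - zhat j)) ^ 2)) by nra.
  assert (P2 : 0 <= alpha / (2 * INR n) * rsum p (fun j => (b j - zhat j) ^ 2)) by nra.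
  split; [lra|].
  intros Heq j Hj.
  assert (Z : alpha / (2 * INR n) * rsum p (fun j => (b j - zhat j) ^ 2) = 0) by lra.
  assert (Z2 : rsum p (fun j => (b j - zhat j) ^ 2) = 0).
  { destruct (Rmult_integral _ _ Z); [lra|auto]. }
  pose proof (rsum_sq_zero p (fun j => b j - zhat j) Z2 j Hj). cbv beta in H. lra.
Qed.
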